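(* Let $M$ be a score distribution model with non-negative weights ($w_M(j,k)\ge 0$ for all $j,k$). Let $s_1,s_2$ be road segments with $s_1.\mathit{lb} > s_2.\mathit{ub}$. Then $s_2$ does not contain an optimal subsegment (indeed, no network point of $s_2$ has maximal score $\mathit{score}_M$ over all network points).
   Context: A road network is a directed graph $G=(V,E)$ embedded in the plane: each vertex $v$ has a location $\mathit{loc}(v)\in\mathbb{R}^2$, and each edge $e=(v_i,v_j)$ has length $\|e\|$ equal to the Euclidean distance between its endpoints. A network point is a pair $p=(\mathit{eid},d)$ where $\mathit{eid}$ identifies an edge $e=(v_i,v_j)$ and $d\in[0,1]$ is the ratio of the distance from $v_i$ to the point to $\|e\|$; $P$ is the set of all network points. A road segment is a sequence $\langle p_1,\dots,p_n\rangle$, $n\ge 2$, with $p_1,p_n\in P$, $p_2,\dots,p_{n-1}\in V$, $p_1,p_2$ on the same edge, $p_{n-1},p_n$ on the same edge, and consecutive interior vertices joined by edges; a segment is identified with the set of network points it passes through, and $S$ is the set of segments. A facility $f$ is located at a network point $f.p$. A route usage object $\mathit{ro}=(\mathit{rid},r,\mathit{count},\langle \mathit{usage}_1,\dots,\mathit{usage}_{\mathit{count}}\rangle)$ has a route $r$ which is a road segment. A route $r$ covers a segment $s'$ if every point of $s'$ lies on $r$, and intersects $s'$ if some point of $s'$ lies on $r$; $s'.C$ (resp. $s'.I$) is the set of route usage objects whose routes cover (resp. intersect) $s'$. For a threshold $\delta>0$, a facility $f$ attracts $r$ if the shortest network distance from $f.p$ to $r$ is at most $\delta$. Each route has a score $\mathit{score}(r)\ge0$.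 A score distribution model $M$: the facilities attracting $r$ partition $r$ into $k$ consecutive subsegments and the $j$-th receives $w_M(j,k)\,\mathit{score}(r)$. The score $\mathit{score}_M(p)$ of a network point $p$ is the sum over all route usage objects whose route contains $p$ of the amount assigned by $M$ to the subsegment of that route containing $p$. For a segment $s$ and route $r_i$ intersecting $s$, $w_M(j_i,k_i)$ denotes the fraction of $\mathit{score}(r_i)$ that $M$ assigns to the $j_i$-th of the $k_i$ subsegments of $r_i$, the one in which $s$ lies. Then $s.\mathit{lb}=\sum_{r_i\in s.C} w_M(j_i,k_i)\mathit{score}(r_i)$ and $s.\mathit{ub}=\sum_{r_i\in s.I} w_M(j_i,k_i)\mathit{score}(r_i)$ (if $s$ meets several subsegments of a route because facilities lie on $s$, the lower bound takes the smallest and the upper bound the largest of these values). An optimal segment is a segment $s_{\mathit{opt}}$ such that (1) all points of $s_{\mathit{opt}}$ have the same $\mathit{score}_M$; (2) for all $p\in s_{\mathit{opt}}$ and $p'\in P$, $\mathit{score}_M(p')\le\mathit{score}_M(p)$; (3) there is no segment $s'\in S$ with $s_{\mathit{opt}}\subset s'$ satisfying (1) and (2). An optimal subsegment is a subsegment of an optimal segment. *)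

(* Defs.v *)
From HB Require Import structures.
From mathcomp Require Import all_boot all_order all_algebra.
From mathcomp Require Import boolp reals.
Set Implicit Arguments. Unset Strict Implicit. Unset Printing Implicit Defensive.
Import Order.TTheory GRing.Theory Num.Theory.
Local Open Scope ring_scope.

Record road_network (R : realType) := RoadNetwork {
  vertex : finType;
  edge : finType;
  esrc : edge -> vertex;
  etgt : edge -> vertex;
  loc : vertex -> (R * R)%type }.

Section RoadNet.
Variable R : realType.
Variable G : road_network R.

Definition edge_len (e : edge G) : R :=
  let a := loc (esrc e) in let b := loc (etgt e) in
  Num.sqrt ((a.1 - b.1) ^+ 2 + (a.2 - b.2) ^+ 2).

Definition netpoint := (edge G * R)%type.
Definition is_netpoint (p : netpoint) : Prop := 0 <= p.2 <= 1.

Inductive place := PVert of vertex G | PInner of edge G & R.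
Definition place_of (p : netpoint) : place :=
  if p.2 == 0 then PVert (esrc p.1)
  else if p.2 == 1 then PVert (etgt p.1) else PInner p.1 p.2.

(* A road segment <p1, v2, ..., v_{n-1}, pn>, represented by the sequence of
   edges it traverses e1 :: rest, the ratio d1 of p1 on e1 and the ratio dn
   of pn on the last edge. *)
Record segment := Segment {
  seg_d1 : R; seg_e1 : edge G; seg_rest : seq (edge G); seg_dn : R }.

Definition seg_edges (s : segment) := seg_e1 s :: seg_rest s.
Definition seg_size (s : segment) := size (seg_edges s).
Definition seg_edge (s : segment) (i : nat) := nth (seg_e1 s) (seg_edges s) i.
Definition seg_last (s : segment) := last (seg_e1 s) (seg_rest s).
Definition seg_lo (s : segment) (i : nat) : R := if i == 0%N then seg_d1 s else 0.
Definition seg_hi (s : segment) (i : nat) : R :=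
  if i == (seg_size s).-1 then seg_dn s else 1.

Definition seg_valid (s : segment) : Prop :=
  [/\ 0 <= seg_d1 s <= 1, 0 <= seg_dn s <= 1,
      path (fun e f => etgt e == esrc f) (seg_e1 s) (seg_rest s)
    & seg_rest s = [::] -> seg_d1 s <= seg_dn s].

Definition on_seg (s : segment) (x : place) : Prop :=
  exists i, (i < seg_size s)%N /\
    exists d, seg_lo s i <= d <= seg_hi s i /\ place_of (seg_edge s i, d) = x.

Definition seg_start (s : segment) := place_of (seg_e1 s, seg_d1 s).
Definition seg_end (s : segment) := place_of (seg_last s, seg_dn s).
Definition seg_length (s : segment) : R :=
  \sum_(i < seg_size s) (seg_hi s i - seg_lo s i) * edge_len (seg_edge s i).

Definition covers (r s : segment) : Prop := forall x, on_seg s x -> on_seg r x.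
Definition intersects (r s : segment) : Prop := exists x, on_seg s x /\ on_seg r x.

Definition netdist_le (a : place) (r : segment) (delta : R) : Prop :=
  forall eps, 0 < eps -> exists w, [/\ seg_valid w, seg_start w = a,
     on_seg r (seg_end w) & seg_length w < delta + eps].

Definition attracts (delta : R) (f : netpoint) (r : segment) : Prop :=
  netdist_le (place_of f) r delta.

Record route_usage (U : Type) := RouteUsage {
  rid : nat; route : segment; rcount : nat; rusages : seq U }.

Definition route_usage_valid (U : Type) (ro : route_usage U) : Prop :=
  seg_valid (route ro) /\ size (rusages ro) = rcount ro.

(* A score distribution model: weights w_M(j,k) (j is 1-based) and the rule
   by which the facilities attracting a route partition it into its
   consecutive subsegments. *)
Record score_model := ScoreModel {
  wM : nat -> nat -> R;
  partM : segment -> seq netpoint -> seq segment }.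

Definition is_partition (r : segment) (subs : seq segment) : Prop :=
  [/\ subs <> [::] /\
        (forall j, (j < size subs)%N -> seg_valid (nth r subs j)),
      forall x, on_seg r x <->
        exists j, (j < size subs)%N /\ on_seg (nth r subs j) x,
      forall j, (j.+1 < size subs)%N ->
        seg_end (nth r subs j) = seg_start (nth r subs j.+1),
      seg_start (nth r subs 0) = seg_start r
    & seg_end (last r subs) = seg_end r].

Section Scores.
Variables (U : Type) (M : score_model) (delta : R) (fs : seq netpoint)
  (ros : seq (route_usage U)) (score : route_usage U -> R).

Definition attracting (ro : route_usage U) : seq netpoint :=
  [seq f <- fs | `[< attracts delta f (route ro) >]].
Definition subsegs (ro : route_usage U) : seq segment :=
  partM M (route ro) (attracting ro).
Definition nsub (ro : route_usage U) : nat := size (subsegs ro).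
Definition subseg (ro : route_usage U) (j : nat) : segment :=
  nth (route ro) (subsegs ro) j.
(* 0-based index of the (first) subsegment of ro containing x *)
Definition sub_index (ro : route_usage U) (x : place) : nat :=
  find (fun s => `[< on_seg s x >]) (subsegs ro).

Definition score_at (x : place) : R :=
  \sum_(ro <- ros | `[< on_seg (route ro) x >])
     wM M (sub_index ro x).+1 (nsub ro) * score ro.

Definition meet_weights (ro : route_usage U) (s : segment) : seq R :=
  [seq wM M j.+1 (nsub ro) | j <- iota 0 (nsub ro) & `[< intersects (subseg ro j) s >]].

Definition seg_lb (s : segment) : R :=
  \sum_(ro <- ros | `[< covers (route ro) s >])
     (\big[Order.min/head 0 (meet_weights ro s)]_(x <- meet_weights ro s) x) * score ro.
Definition seg_ub (s : segment) : R :=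
  \sum_(ro <- ros | `[< intersects (route ro) s >])
     (\big[Order.max/head 0 (meet_weights ro s)]_(x <- meet_weights ro s) x) * score ro.

Definition same_score (s : segment) : Prop :=
  exists c, forall x, on_seg s x -> score_at x = c.
Definition max_score (s : segment) : Prop :=
  forall x, on_seg s x -> forall p, is_netpoint p -> score_at (place_of p) <= score_at x.
Definition optimal_segment (s : segment) : Prop :=
  [/\ seg_valid s, same_score s, max_score s &
      ~ exists s', [/\ seg_valid s', covers s' s, (exists x, on_seg s' x /\ ~ on_seg s x),
                      same_score s' & max_score s']].
Definition optimal_subsegment (s : segment) : Prop :=
  seg_valid s /\ exists so, optimal_segment so /\ covers so s.

End Scores.
End RoadNet.

(* Main.v *)
Require Import Defs.
From HB Require Import structures.
From mathcomp Require Import all_boot all_order all_algebra.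
From mathcomp Require Import boolp reals.
From Stdlib Require List.
Import Order.TTheory GRing.Theory Num.Theory.
Local Open Scope ring_scope.
Set Implicit Arguments. Unset Strict Implicit.
Lemma bigmin_le (R : realType) (l : seq R) (idx a : R) :
  a \in l -> \big[Order.min/idx]_(x <- l) x <= a.
Proof.
elim: l => [//|y l IH]; rewrite inE big_cons ge_min => /orP[/eqP->|/IH->];
  by rewrite ?lexx ?orbT.
Qed.

Lemma le_bigmax (R : realType) (l : seq R) (idx a : R) :
  a \in l -> a <= \big[Order.max/idx]_(x <- l) x.
Proof.
elim: l => [//|y l IH]; rewrite inE big_cons le_max => /orP[/eqP->|/IH->];
  by rewrite ?lexx ?orbT.
Qed.

Lemma bigmax_ge0 (R : realType) (l : seq R) :
  (forall y, y \in l -> 0 <= y) -> 0 <= \big[Order.max/head 0 l]_(x <- l) x.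
Proof.
case: l => [|y l] H; first by rewrite big_nil.
apply: le_trans (H y (mem_head _ _)) _; apply: le_bigmax; exact: mem_head.
Qed.

Lemma sub_in (R : realType) (G : road_network R) (U : Type)
  (M : score_model G) (delta : R) (fs : seq (netpoint G)) (ro : route_usage G U) x :
  is_partition (route ro) (subsegs M delta fs ro) -> on_seg (route ro) x ->
  (sub_index M delta fs ro x < nsub M delta fs ro)%N /\
  on_seg (subseg M delta fs ro (sub_index M delta fs ro x)) x.
Proof.
move=> [_ Hx _ _ _] /Hx [j [Hj Hon]].
have Hh : has (fun s => `[< on_seg s x >]) (subsegs M delta fs ro).
  by apply/(has_nthP (route ro)); exists j => //; apply/asboolP.
split; first by rewrite /sub_index /nsub -has_find.
by apply/asboolP; apply: (nth_find (route ro) Hh).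
Qed.

Lemma w_in (R : realType) (G : road_network R) (U : Type)
  (M : score_model G) (delta : R) (fs : seq (netpoint G)) (ro : route_usage G U) x s :
  is_partition (route ro) (subsegs M delta fs ro) -> on_seg (route ro) x -> on_seg s x ->
  wM M (sub_index M delta fs ro x).+1 (nsub M delta fs ro) \in meet_weights M delta fs ro s.
Proof.
move=> Hp Hr Hs; have [Hlt Hon] := sub_in Hp Hr.
apply: map_f; rewrite mem_filter mem_iota /= add0n Hlt andbT.
by apply/asboolP; exists x.
Qed.

Lemma mw_ge0 (R : realType) (G : road_network R) (U : Type)
  (M : score_model G) (delta : R) (fs : seq (netpoint G)) (ro : route_usage G U) s :
  (forall j k, 0 <= wM M j k) -> forall y, y \in meet_weights M delta fs ro s -> 0 <= y.
Proof. by move=> Hw y /mapP [j _ ->]. Qed.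

Lemma score_le_ub (R : realType) (G : road_network R) (U : Type)
  (M : score_model G) (delta : R) (fs : seq (netpoint G))
  (ros : seq (route_usage G U)) (score : route_usage G U -> R) s x :
  (forall j k, 0 <= wM M j k) ->
  (forall ro, List.In ro ros -> 0 <= score ro) ->
  (forall ro, List.In ro ros -> is_partition (route ro) (subsegs M delta fs ro)) ->
  on_seg s x -> score_at M delta fs ros score x <= seg_ub M delta fs ros score s.
Proof.
move=> Hw; elim: ros => [|ro ros IH] Hs Hp Hx; first by rewrite /score_at /seg_ub !big_nil.
rewrite /score_at /seg_ub !big_cons -/(score_at _ _ _ _ _ _) -/(seg_ub _ _ _ _ _ _).
have IH' := IH (fun r h => Hs r (or_intror h)) (fun r h => Hp r (or_intror h)) Hx.
have Hs0 := Hs ro (or_introl erefl).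
case: (asboolP (on_seg (route ro) x)) => Hr.
  have -> : `[< intersects (route ro) s >] by apply/asboolP; exists x.
  apply: lerD => //; apply: ler_wpM2r => //.
  apply: le_bigmax; exact: w_in (Hp ro (or_introl erefl)) Hr Hx.
case: (asboolP (intersects (route ro) s)) => _ //.
rewrite -[X in X <= _]add0r; apply: lerD => //; apply: mulr_ge0 => //.
by apply: bigmax_ge0; apply: mw_ge0.
Qed.

Lemma lb_le_score (R : realType) (G : road_network R) (U : Type)
  (M : score_model G) (delta : R) (fs : seq (netpoint G))
  (ros : seq (route_usage G U)) (score : route_usage G U -> R) s x :
  (forall j k, 0 <= wM M j k) ->
  (forall ro, List.In ro ros -> 0 <= score ro) ->
  (forall ro, List.In ro ros -> is_partition (route ro) (subsegs M delta fs ro)) ->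
  on_seg s x -> seg_lb M delta fs ros score s <= score_at M delta fs ros score x.
Proof.
move=> Hw; elim: ros => [|ro ros IH] Hs Hp Hx; first by rewrite /score_at /seg_lb !big_nil.
rewrite /score_at /seg_lb !big_cons -/(score_at _ _ _ _ _ _) -/(seg_lb _ _ _ _ _ _).
have IH' := IH (fun r h => Hs r (or_intror h)) (fun r h => Hp r (or_intror h)) Hx.
have Hs0 := Hs ro (or_introl erefl).
case: (asboolP (covers (route ro) s)) => Hc.
  have Hr := Hc x Hx.
  have -> : `[< on_seg (route ro) x >] by apply/asboolP.
  apply: lerD => //; apply: ler_wpM2r => //.
  apply: bigmin_le; exact: w_in (Hp ro (or_introl erefl)) Hr Hx.
case: (asboolP (on_seg (route ro) x)) => _ //.
rewrite -[X in X <= _]add0r; apply: lerD => //; exact: mulr_ge0.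
Qed.

Lemma start_on (R : realType) (G : road_network R) (s : segment G) :
  seg_valid s -> on_seg s (seg_start s).
Proof.
move=> [/andP[H0 H1] _ _ Hn]; exists 0%N; split; first by [].
exists (seg_d1 s); split; last by [].
rewrite /seg_lo /seg_hi /= lexx /=.
rewrite /seg_size /seg_edges /=.
case E: (seg_rest s) => [|e r] /=; first by apply: Hn.
by [].
Qed.

Theorem lemma3 (R : realType) (G : road_network R) (U : Type)
  (M : score_model G) (delta : R) (fs : seq (netpoint G))
  (ros : seq (route_usage G U)) (score : route_usage G U -> R)
  (s1 s2 : segment G) :
  (forall j k, 0 <= wM M j k) ->
  0 < delta ->
  (forall f, List.In f fs -> is_netpoint f) ->
  (forall ro, List.In ro ros -> route_usage_valid ro) ->
  (forall ro, List.In ro ros -> 0 <= score ro) ->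
  (forall ro, List.In ro ros -> is_partition (route ro) (subsegs M delta fs ro)) ->
  seg_valid s1 -> seg_valid s2 ->
  seg_ub M delta fs ros score s2 < seg_lb M delta fs ros score s1 ->
  (~ exists s, optimal_subsegment M delta fs ros score s /\ covers s2 s) /\
  (~ exists p, [/\ is_netpoint p, on_seg s2 (place_of p) &
      forall p', is_netpoint p' ->
        score_at M delta fs ros score (place_of p') <= score_at M delta fs ros score (place_of p)]).
Proof.
move=> Hw _ _ _ Hs Hp V1 V2 Hlt.
pose p1 : netpoint G := (seg_e1 s1, seg_d1 s1).
have Np1 : is_netpoint p1 by case: V1.
have Key : forall x, on_seg s2 x ->
    score_at M delta fs ros score x < score_at M delta fs ros score (place_of p1).
  move=> x Hx; apply: le_lt_trans (score_le_ub Hw Hs Hp Hx) _.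
  apply: lt_le_trans Hlt _; exact: lb_le_score Hw Hs Hp (start_on V1).
split.
  move=> [s [[Vs [so [[_ _ Hmax _] Hcov]]] Hc2]].
  have Hx := start_on Vs.
  have := Hmax _ (Hcov _ Hx) p1 Np1.
  by rewrite leNgt (Key _ (Hc2 _ Hx)).
move=> [p [_ Hon Hm]].
by have := Hm p1 Np1; rewrite leNgt Key.
Qed.
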